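(* Let $G$ and $N$ be finitely presented groups, $Q$ a finite group, and $H$ an $N$ by $Q$ extension with transversal map $s:Q\to H$. The following are equivalent: (1) there is a surjective homomorphism $G\to H$; (2) there are homomorphisms $\tau:G\to Q$ and $\kappa:G\to H$ such that (a) $\tau$ is surjective, (b) for all $g\in G$, if $\kappa(g)=n\,s(q)$ with $n\in N$, $q\in Q$, then $q=\tau(g)$, and (c) for every $n\in N$ there exists $g\in\ker(\tau)$ with $\kappa(g)=n\,s(1_Q)$.
   Context: $H$ is an $N$ by $Q$ extension if $N$ is a normal subgroup of $H$ with $H/N\cong Q$; write $\pi_Q:H\to Q$ for the resulting epimorphism. A transversal map is a map $s:Q\to H$ with $\pi_Q(s(q))=q$ for all $q$ (so its image meets each coset of $N$ exactly once), chosen with $s(1_Q)=1_H$; every element of $H$ is uniquely $n\,s(q)$ with $n\in N$, $q\in Q$. *)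

(* Defs.v *)
From Stdlib Require Import List.
From mathcomp Require Import all_boot.
Set Implicit Arguments.
Unset Strict Implicit.
Unset Printing Implicit Defensive.

Record group := Group {
  carrier :> Type;
  gmul : carrier -> carrier -> carrier;
  gone : carrier;
  ginv : carrier -> carrier;
  gmulA : forall x y z, gmul x (gmul y z) = gmul (gmul x y) z;
  gmul1 : forall x, gmul gone x = x;
  gmulV : forall x, gmul (ginv x) x = gone
}.

Arguments gmul {g} _ _.
Arguments gone {g}.
Arguments ginv {g} _.

Definition is_hom (G H : group) (f : G -> H) : Prop :=
  forall x y : G, f (gmul x y) = gmul (f x) (f y).

Definition surj (A B : Type) (f : A -> B) : Prop := forall y, exists x, f x = y.

Definition finite_group (G : group) : Prop :=
  exists l : list G, forall x : G, List.In x l.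

(* Words in n generators: a letter (i, b) stands for x_i if b = false, x_i^-1 if b = true. *)
Definition eval_word (G : group) (n : nat) (gen : 'I_n -> G)
    (w : seq ('I_n * bool)) : G :=
  foldr (fun p acc => gmul (if p.2 then ginv (gen p.1) else gen p.1) acc) gone w.

(* G is finitely presented: G is generated by finitely many elements gen
   satisfying finitely many relators R, and <gen | R> has the universal
   property of the presented group (von Dyck): any assignment of the
   generators in any group satisfying the relators extends to a
   homomorphism.  This is equivalent to G ~= F_n / <<R>>. *)
Definition finitely_presented (G : group) : Prop :=
  exists (n : nat) (gen : 'I_n -> G) (R : seq (seq ('I_n * bool))),
    (forall x : G, exists w, eval_word gen w = x) /\
    (forall r, r \in R -> eval_word gen r = gone) /\
    (forall (K : group) (k : 'I_n -> K),
        (forall r, r \in R -> eval_word k r = gone) ->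
        exists f : G -> K, is_hom f /\ forall i, f (gen i) = k i).

(* H is an N by Q extension: iota : N -> H injective hom, piQ : H -> Q
   surjective hom, and the image of iota is exactly ker piQ
   (so N is identified with a normal subgroup of H and H/N ~= Q). *)
Definition group_extension (N H Q : group) (iota : N -> H) (piQ : H -> Q) : Prop :=
  [/\ is_hom iota, injective iota, is_hom piQ, surj piQ &
      forall h : H, piQ h = gone <-> exists n : N, iota n = h].

Definition transversal_map (H Q : group) (piQ : H -> Q) (s : Q -> H) : Prop :=
  (forall q : Q, piQ (s q) = q) /\ s gone = gone.

(* Main.v *)
Require Import Defs.
From mathcomp Require Import all_boot.

Section GL.
Variable G : group.
Lemma mulgV' (x : G) : gmul x (ginv x) = gone.
Proof.
have e := gmulV (ginv x).
rewrite -[gmul x (ginv x)]gmul1 -{1}e -gmulA (gmulA (ginv x)) gmulV gmul1 //.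
Qed.
Lemma mulg1' (x : G) : gmul x gone = x.
Proof. by rewrite -(gmulV x) gmulA mulgV' gmul1. Qed.
Lemma split' (x y : G) : x = gmul (gmul x (ginv y)) y.
Proof. by rewrite -gmulA gmulV mulg1'. Qed.
Lemma inv_uniq (a b : G) : gmul a b = gone -> a = ginv b.
Proof. move=> h; by rewrite -[a]mulg1' -(mulgV' b) gmulA h gmul1. Qed.
End GL.

Lemma hom1 (G H : group) (f : G -> H) : is_hom f -> f gone = gone.
Proof.
move=> hf. have e : f gone = gmul (f gone) (f gone) by rewrite -hf gmul1.
by rewrite -[f gone]gmul1 -(gmulV (f gone)) -gmulA -e.
Qed.
Lemma homV (G H : group) (f : G -> H) (x : G) : is_hom f -> f (ginv x) = ginv (f x).
Proof. move=> hf; apply: inv_uniq; by rewrite -hf gmulV hom1. Qed.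

Theorem lemma2p5 (G N Q H : group) (iota : N -> H) (piQ : H -> Q) (s : Q -> H) :
  finitely_presented G -> finitely_presented N -> finite_group Q ->
  group_extension iota piQ -> transversal_map piQ s ->
  ((exists f : G -> H, is_hom f /\ surj f) <->
   (exists (tau : G -> Q) (kappa : G -> H),
      [/\ is_hom tau, is_hom kappa,
          surj tau,
          (forall (g : G) (n : N) (q : Q), kappa g = gmul (iota n) (s q) -> q = tau g) &
          (forall n : N, exists g : G, tau g = gone /\ kappa g = gmul (iota n) (s gone))])).
Proof.
move=> _ _ _ [hi ii hp sp ker] [hs s1].
have pi1 : forall n, piQ (iota n) = gone by move=> n; apply/ker; exists n.
split.
  move=> [f [hf sf]]. exists (fun g => piQ (f g)), f; split => //.
  - by move=> x y; rewrite hf hp.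
  - move=> q; case: (sp q) => h <-; case: (sf h) => g <-; by exists g.
  - by move=> g n q ->; rewrite hp pi1 hs gmul1.
  - move=> n; case: (sf (gmul (iota n) (s gone))) => g e; exists g; split => //.
    by rewrite e hp pi1 hs gmul1.
move=> [tau [kappa [ht hk st hb hc]]].
exists kappa; split => // h.
have dec : forall h, exists n, h = gmul (iota n) (s (piQ h)).
  move=> h'. have : piQ (gmul h' (ginv (s (piQ h')))) = gone.
    by rewrite hp (@homV _ _ piQ _ hp) hs mulgV'.
  move/ker => [n en]; exists n; by rewrite en -split'.
case: (dec h) => n0 e0.
case: (st (piQ h)) => g1 eg1.
case: (dec (kappa g1)) => n1 e1.
have eq : piQ (kappa g1) = piQ h by rewrite -eg1; apply: hb e1.
rewrite eq in e1.
case: (hc (gmul n0 (ginv n1))) => g2 [_ e2].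
exists (gmul g2 g1).
rewrite hk e2 s1 mulg1' e1 hi (@homV _ _ iota _ hi) gmulA -(gmulA (iota n0)) gmulV mulg1' -e0 //.
Qed.
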